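(* Let $\alpha\in(0,\tfrac12)$ and $0<c<C'$. For $N=|\{k\in\mathbb{Z}^2:|k|<k_{\mathrm F}\}|$, consider the annulus $\mathcal A=\{p\in\mathbb{R}^2:k_{\mathrm F}\le|p|<k_{\mathrm F}+\Delta\}$ with thickness $\Delta$ satisfying $cN^{-\alpha}<\Delta<C'N^{-\alpha}$. Then there is a constant $C>0$ (independent of $N$, $\Delta$ and $k$) such that for all $k\in\mathbb{Z}^2\setminus\{0\}$, $$|\mathcal A\cap(\mathcal A+k)\cap\mathbb{Z}^2|\le C\big(N^{\frac34-\frac52\alpha}+N^{\frac14-\frac12\alpha}\big).$$
   Context: $k_{\mathrm F}>0$ is the Fermi momentum with $B_{\mathrm F}=\{k\in\mathbb{Z}^2:|k|<k_{\mathrm F}\}$, $N=|B_{\mathrm F}|$, and $k_{\mathrm F}^2=\frac12(\inf_{p\notin B_{\mathrm F}}|p|^2+\sup_{q\in B_{\mathrm F}}|q|^2)$ (so $k_{\mathrm F}\sim N^{1/2}$). *)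

(* Defs.v *)
From Stdlib Require Import Reals Lra ZArith List.
Open Scope R_scope.

Definition pt := (Z * Z)%type.
Definition norm2 (p : pt) : R := IZR (fst p) ^ 2 + IZR (snd p) ^ 2.
Definition pnorm (p : pt) : R := sqrt (norm2 p).
Definition psub (p k : pt) : pt := ((fst p - fst k)%Z, (snd p - snd k)%Z).

Definition in_BF (kF : R) (p : pt) : Prop := pnorm p < kF.

Definition is_glb (E : R -> Prop) (m : R) : Prop :=
  (forall x, E x -> m <= x) /\ (forall b, (forall x, E x -> b <= x) -> b <= m).

Definition fermi_convention (kF : R) : Prop :=
  0 < kF /\
  exists m_out m_in : R,
    is_glb (fun x => exists p, ~ in_BF kF p /\ x = pnorm p ^ 2) m_out /\
    is_lub (fun x => exists q, in_BF kF q /\ x = pnorm q ^ 2) m_in /\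
    kF ^ 2 = (m_out + m_in) / 2.

Definition card_BF (kF : R) (N : nat) : Prop :=
  exists l : list pt, NoDup l /\ (forall p, In p l <-> in_BF kF p) /\ length l = N.

Definition in_annulus (kF Delta : R) (p : pt) : Prop :=
  kF <= pnorm p < kF + Delta.

Definition in_AAk (kF Delta : R) (k p : pt) : Prop :=
  in_annulus kF Delta p /\ in_annulus kF Delta (psub p k).

(* Main.v *)
Require Import Defs.
From Stdlib Require Import Reals Lra Lia ZArith List Psatz.
Open Scope R_scope.

Lemma Rabs_le_inv (x W : R) : Rabs x <= W -> -W <= x <= W.
Proof. unfold Rabs; destruct (Rcase_abs x); intros; lra. Qed.
Lemma Rabs_le_intro (x W : R) : -W <= x <= W -> Rabs x <= W.
Proof. unfold Rabs; destruct (Rcase_abs x); intros; lra. Qed.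

Lemma nodup_Z_range (l : list Z) lo hi : NoDup l ->
  (forall z, In z l -> (lo <= z <= hi)%Z) -> (length l <= Z.to_nat (hi - lo + 1))%nat.
Proof.
  intros Hn Hr.
  set (rg := map (fun i => (lo + Z.of_nat i)%Z) (seq 0 (Z.to_nat (hi - lo + 1)))).
  assert (Hl : length rg = Z.to_nat (hi - lo + 1)) by (unfold rg; rewrite length_map, length_seq; auto).
  rewrite <- Hl. apply NoDup_incl_length; auto.
  intros z Hz. apply Hr in Hz. unfold rg. apply in_map_iff.
  exists (Z.to_nat (z - lo)). split; [lia|]. apply in_seq. lia.
Qed.

Lemma count_inj {A} (l : list A) (f : A -> Z) (a W : R) : NoDup l -> 0 <= W ->
  (forall x y, In x l -> In y l -> f x = f y -> x = y) ->
  (forall x, In x l -> a <= IZR (f x) <= a + W) -> INR (length l) <= W + 2.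
Proof.
  intros Hn HW Hi Hr.
  assert (Hm : NoDup (map f l)).
  { apply NoDup_map_NoDup_ForallPairs; [|exact Hn]. intros x y Hx Hy; apply Hi; auto. }
  destruct (archimed a) as [a1 a2]. destruct (archimed (a + W)) as [b1 b2].
  assert (Hb := nodup_Z_range (map f l) (up a - 1) (up (a + W) - 1) Hm).
  rewrite length_map in Hb.
  assert (Hle : (length l <= Z.to_nat (up (a + W) - 1 - (up a - 1) + 1))%nat).
  { apply Hb. intros z Hz. apply in_map_iff in Hz. destruct Hz as [x [<- Hx]].
    apply Hr in Hx. split.
    - assert (IZR (up a - 1) < IZR (f x + 1)) by (rewrite plus_IZR, minus_IZR; lra).
      apply lt_IZR in H. lia.
    - assert (IZR (f x) < IZR (up (a + W))) by lra. apply lt_IZR in H. lia. }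
  apply le_INR in Hle. eapply Rle_trans; [exact Hle|].
  destruct (Z_lt_le_dec (up (a + W) - 1 - (up a - 1) + 1) 0).
  - replace (Z.to_nat _) with 0%nat by lia. simpl. lra.
  - rewrite INR_IZR_INZ, Z2Nat.id by lia.
    rewrite !plus_IZR, !minus_IZR. lra.
Qed.

Lemma count_inj_pw {A} (l : list A) (f : A -> Z) (W : R) : NoDup l -> 0 <= W ->
  (forall x y, In x l -> In y l -> f x = f y -> x = y) ->
  (forall x y, In x l -> In y l -> Rabs (IZR (f x) - IZR (f y)) <= W) ->
  INR (length l) <= 2 * W + 2.
Proof.
  intros Hn HW Hi Hr. destruct l as [|x0 l'].
  - simpl. lra.
  - apply (count_inj _ f (IZR (f x0) - W) (2 * W)); auto; try lra.
    intros x Hx. assert (H := Hr x x0 Hx (in_eq _ _)).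
    apply Rabs_le_inv in H. lra.
Qed.

Lemma split_count {A} (l : list A) (ks : list Z) (f : A -> Z) (B : R) :
  0 <= B -> NoDup l ->
  (forall x, In x l -> In (f x) ks) ->
  (forall j m, NoDup m -> (forall x, In x m -> In x l /\ f x = j) -> INR (length m) <= B) ->
  INR (length l) <= INR (length ks) * B.
Proof.
  revert l. induction ks as [|j ks IH]; intros l HB Hn Hk Hc.
  - destruct l as [|x l]; [simpl; lra|]. exfalso. apply (Hk x). left; auto.
  - rewrite <- (filter_length (fun x => Z.eqb (f x) j) l).
    rewrite plus_INR. simpl length. rewrite S_INR.
    assert (INR (length (filter (fun x => negb (f x =? j)%Z) l)) <= INR (length ks) * B).
    { apply IH; auto.
      - apply NoDup_filter; auto.
      - intros x Hx. apply filter_In in Hx. destruct Hx as [Hx Hn'].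
        destruct (Hk x Hx) as [E|E]; auto. rewrite E, Z.eqb_refl in Hn'. discriminate.
      - intros j' m Hm Hx. apply (Hc j' m Hm). intros x Hxm. destruct (Hx x Hxm) as [H1 H2].
        apply filter_In in H1. tauto. }
    assert (INR (length (filter (fun x => (f x =? j)%Z) l)) <= B).
    { apply (Hc j). apply NoDup_filter; auto. intros x Hx. apply filter_In in Hx.
      destruct Hx as [Hx E]. apply Z.eqb_eq in E. auto. }
    lra.
Qed.

Lemma Zrange_list (lo hi : Z) : { ks : list Z | (forall z, (lo <= z <= hi)%Z -> In z ks) /\
   length ks = Z.to_nat (hi - lo + 1) }.
Proof.
  exists (map (fun i => (lo + Z.of_nat i)%Z) (seq 0 (Z.to_nat (hi - lo + 1)))).
  split.
  - intros z Hz. apply in_map_iff. exists (Z.to_nat (z - lo)). split; [lia|]. apply in_seq. lia.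
  - rewrite length_map, length_seq; auto.
Qed.

Lemma split_count_pw {A} (l : list A) (f : A -> Z) (W B : R) :
  0 <= B -> 0 <= W -> NoDup l ->
  (forall x y, In x l -> In y l -> Rabs (IZR (f x) - IZR (f y)) <= W) ->
  (forall j m, NoDup m -> (forall x, In x m -> In x l /\ f x = j) -> INR (length m) <= B) ->
  INR (length l) <= (2 * W + 2) * B.
Proof.
  intros HB HW Hn Hr Hc. destruct l as [|x0 l'].
  - simpl. nra.
  - set (a := IZR (f x0) - W).
    destruct (archimed a) as [a1 a2]. destruct (archimed (a + 2 * W)) as [b1 b2].
    destruct (Zrange_list (up a - 1) (up (a + 2 * W) - 1)) as [ks [Hks Hlen]].
    assert (H := split_count (x0 :: l') ks f B HB Hn). 
    assert (Hk : INR (length ks) <= 2 * W + 2).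
    { rewrite Hlen. destruct (Z_lt_le_dec (up (a + 2 * W) - 1 - (up a - 1) + 1) 0).
      - replace (Z.to_nat _) with 0%nat by lia. simpl. lra.
      - rewrite INR_IZR_INZ, Z2Nat.id by lia. rewrite !plus_IZR, !minus_IZR. lra. }
    assert (INR (length (x0 :: l')) <= INR (length ks) * B).
    { apply H; auto. intros x Hx. apply Hks.
      assert (HH := Hr x x0 Hx (in_eq _ _)). apply Rabs_le_inv in HH. split.
      - assert (IZR (up a - 1) < IZR (f x + 1)) by (rewrite plus_IZR, minus_IZR; unfold a in *; lra).
        apply lt_IZR in H0. lia.
      - assert (IZR (f x) < IZR (up (a + 2 * W))) by (unfold a in *; lra). apply lt_IZR in H0. lia. }
    nra.
Qed.

Definition tt (k p : pt) : Z := (fst k * fst p + snd k * snd p)%Z.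
Definition ss (k p : pt) : Z := (fst k * snd p - snd k * fst p)%Z.
Definition QQ (k : pt) : Z := (fst k * fst k + snd k * snd k)%Z.
Definition nZ (p : pt) : Z := (fst p * fst p + snd p * snd p)%Z.

Lemma norm2_nZ p : norm2 p = IZR (nZ p).
Proof. unfold norm2, nZ. rewrite plus_IZR, !mult_IZR. ring. Qed.

Lemma norm2_psub p k : norm2 (psub p k) = IZR (nZ p) - 2 * IZR (tt k p) + IZR (QQ k).
Proof. unfold norm2, nZ, psub, tt, QQ; simpl. rewrite !plus_IZR, !minus_IZR, !mult_IZR. ring. Qed.

Lemma ts_ident k p : IZR (tt k p) ^ 2 + IZR (ss k p) ^ 2 = IZR (QQ k) * IZR (nZ p).
Proof. unfold nZ, tt, ss, QQ. rewrite !plus_IZR, !minus_IZR, !mult_IZR. ring. Qed.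

Lemma QQ_pos k : k <> (0%Z, 0%Z) -> 1 <= IZR (QQ k).
Proof. intros H. apply IZR_le. unfold QQ. destruct k as [a b]; simpl.
  destruct (Z.eq_dec a 0); destruct (Z.eq_dec b 0); subst; try (exfalso; apply H; reflexivity); nia. Qed.

Lemma inj_ts k p q : k <> (0%Z,0%Z) ->
  (IZR (tt k p) - IZR (tt k q)) ^ 2 + (IZR (ss k p) - IZR (ss k q)) ^ 2 < IZR (QQ k) -> p = q.
Proof.
  intros Hk H. assert (HQ := QQ_pos k Hk).
  destruct p as [p1 p2], q as [q1 q2], k as [k1 k2].
  assert (E : (IZR (tt (k1,k2) (p1,p2)) - IZR (tt (k1,k2) (q1,q2))) ^ 2 + (IZR (ss (k1,k2) (p1,p2)) - IZR (ss (k1,k2) (q1,q2))) ^ 2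
     = IZR (QQ (k1,k2)) * IZR ((p1 - q1) * (p1 - q1) + (p2 - q2) * (p2 - q2))).
  { unfold tt, ss, QQ; simpl. rewrite !plus_IZR, !minus_IZR, !mult_IZR, !minus_IZR. ring. }
  rewrite E in H. assert (H0 : IZR ((p1 - q1) * (p1 - q1) + (p2 - q2) * (p2 - q2)) < 1) by nra.
  apply lt_IZR in H0.
  assert (Hsq : forall d : Z, (d * d < 1 -> d = 0)%Z) by (intros d Hd; destruct (Z.lt_trichotomy d 0) as [h|[h|h]]; nia).
  assert (Hs1 := Z.square_nonneg (p1 - q1)). assert (Hs2 := Z.square_nonneg (p2 - q2)).
  assert (p1 - q1 = 0)%Z by (apply Hsq; lia). assert (p2 - q2 = 0)%Z by (apply Hsq; lia).
  assert (p1 = q1) by lia. assert (p2 = q2) by lia. subst; auto.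
Qed.

Lemma abs_le_sqrt z L : 0 <= L -> z * z <= L -> Rabs z <= sqrt L.
Proof. intros H1 H2. rewrite <- sqrt_Rsqr_abs. apply sqrt_le_1_alt. unfold Rsqr; lra. Qed.

Lemma up_diff x y : Rabs (IZR (up x) - IZR (up y)) <= Rabs (x - y) + 1.
Proof. destruct (archimed x), (archimed y). apply Rabs_le_intro.
  unfold Rabs; destruct (Rcase_abs (x - y)); lra. Qed.

Lemma up_eq x y : up x = up y -> Rabs (x - y) < 1.
Proof. intros E. destruct (archimed x), (archimed y). rewrite E in *.
  unfold Rabs; destruct (Rcase_abs (x - y)); lra. Qed.

Definition good (R L : R) (k p : pt) : Prop :=
  R * R <= IZR (nZ p) < R * R + L /\
  R * R <= IZR (nZ p) - 2 * IZR (tt k p) + IZR (QQ k) < R * R + L.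

Lemma aak_good R D k p : 0 < R -> 0 < D -> in_AAk R D k p -> good R (2 * R * D + D * D) k p.
Proof.
  intros HR HD [[H1 H2] [H3 H4]]. unfold pnorm in *.
  rewrite norm2_nZ in H1, H2. rewrite norm2_psub in H3, H4.
  assert (Hn : 0 <= IZR (nZ p)) by (apply IZR_le; unfold nZ; nia).
  assert (Hm : 0 <= IZR (nZ p) - 2 * IZR (tt k p) + IZR (QQ k)).
  { rewrite <- norm2_psub. unfold norm2. nra. }
  assert (E1 := sqrt_sqrt _ Hn). assert (E2 := sqrt_sqrt _ Hm).
  assert (0 <= sqrt (IZR (nZ p))) by apply sqrt_pos.
  assert (0 <= sqrt (IZR (nZ p) - 2 * IZR (tt k p) + IZR (QQ k))) by apply sqrt_pos.
  unfold good. split; split; nra.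
Qed.

Lemma sq_diff_le a b : 0 <= a -> 0 <= b -> (a - b) * (a - b) <= Rabs (a * a - b * b).
Proof. intros Ha Hb. destruct (Rle_dec a b); unfold Rabs; destruct (Rcase_abs (a*a - b*b)); nra. Qed.

Lemma c1_class (Rf L : R) (k : pt) (j0 : Z) (dl : R) (m : list pt) :
  0 < L -> k <> (0%Z,0%Z) -> (dl = 1 \/ dl = -1) -> NoDup m ->
  (forall x, In x m -> good Rf L k x /\ ss k x = j0 /\ 0 <= dl * IZR (tt k x)) ->
  INR (length m) <= 2 * (sqrt L + 1) + 2.
Proof.
  intros HL Hk Hdl Hn Hm.
  assert (HQ := QQ_pos k Hk). set (Q := IZR (QQ k)) in *.
  set (q := sqrt Q). assert (Hq : q * q = Q) by (apply sqrt_sqrt; lra).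
  assert (Hq0 : 0 < q) by (apply sqrt_lt_R0; lra).
  assert (Hd2 : dl * dl = 1) by (destruct Hdl; subst; lra).
  set (key := fun x => up (dl * IZR (tt k x) / q)).
  assert (Hsq := sqrt_pos L). assert (HsL := sqrt_sqrt L (Rlt_le _ _ HL)).
  apply (count_inj_pw m key (sqrt L + 1)); auto; try lra.
  - intros x y Hx Hy E. apply up_eq in E.
    destruct (Hm x Hx) as [_ [Hsx _]]. destruct (Hm y Hy) as [_ [Hsy _]].
    apply (inj_ts k); auto. fold Q. rewrite Hsx, Hsy. 
    replace (dl * IZR (tt k x) / q - dl * IZR (tt k y) / q) with (dl * (IZR (tt k x) - IZR (tt k y)) / q) in E by (field; lra).
    assert (Ez : Rabs (IZR (tt k x) - IZR (tt k y)) < q).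
    { unfold Rdiv in E. rewrite !Rabs_mult, Rabs_inv, (Rabs_pos_eq q) in E by lra.
      assert (Rabs dl = 1) by (destruct Hdl; subst; unfold Rabs; destruct Rcase_abs; lra).
      rewrite H in E. apply Rmult_lt_reg_r with (/ q). apply Rinv_0_lt_compat; lra.
      rewrite Rinv_r by lra. lra. }
    revert Ez. unfold Rabs; destruct Rcase_abs; intros; nra.
  - intros x y Hx Hy. eapply Rle_trans; [apply up_diff|].
    apply Rplus_le_compat_r.
    destruct (Hm x Hx) as [[Gx1 Gx2] [Hsx Htx]]. destruct (Hm y Hy) as [[Gy1 Gy2] [Hsy Hty]].
    set (a := dl * IZR (tt k x) / q). set (b := dl * IZR (tt k y) / q).
    assert (Ha : 0 <= a) by (unfold a; apply Rmult_le_pos; auto; left; apply Rinv_0_lt_compat; lra).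
    assert (Hb : 0 <= b) by (unfold b; apply Rmult_le_pos; auto; left; apply Rinv_0_lt_compat; lra).
    assert (Ix := ts_ident k x). assert (Iy := ts_ident k y). fold Q in Ix, Iy.
    rewrite Hsx in Ix. rewrite Hsy in Iy.
    assert (Eab : a * a - b * b = IZR (nZ x) - IZR (nZ y)).
    { unfold a, b. apply Rmult_eq_reg_r with Q; [|lra].
      replace ((dl * IZR (tt k x) / q * (dl * IZR (tt k x) / q) - dl * IZR (tt k y) / q * (dl * IZR (tt k y) / q)) * Q)
        with ((dl * dl) * (IZR (tt k x) ^ 2 - IZR (tt k y) ^ 2) * (Q / (q * q))) by (field; lra).
      rewrite Hd2, Hq. unfold Rdiv. rewrite Rinv_r by lra. nra. }
    apply abs_le_sqrt; try lra. eapply Rle_trans; [apply sq_diff_le; auto|].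
    rewrite Eab. apply Rabs_le_intro. lra.
Qed.

Lemma t_bounds (Rf L : R) k x : good Rf L k x -> -L < 2 * IZR (tt k x) - IZR (QQ k) < L.
Proof. intros [[H1 H2] [H3 H4]]. split; lra. Qed.

Lemma le_div_intro a b c : 0 < c -> a * c <= b -> a <= b / c.
Proof. intros Hc H. apply Rmult_le_reg_r with c; auto. unfold Rdiv. rewrite Rmult_assoc, Rinv_l by lra. lra. Qed.

Lemma abs_diff_bound A B S W : 0 < S -> S <= A + B -> 0 <= A -> 0 <= B ->
  Rabs (A * A - B * B) <= W -> Rabs (A - B) <= W / S.
Proof.
  intros HS HAB HA HB HW. apply Rabs_le_inv in HW. apply Rabs_le_intro.
  split.
  - assert ((B - A) * S <= W) by (destruct (Rle_dec A B); nra).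
    assert (B - A <= W / S) by (apply le_div_intro; auto). lra.
  - apply le_div_intro; auto. destruct (Rle_dec A B); nra.
Qed.

Lemma c1_half (Rf L : R) (k : pt) (e : Z) (m : list pt) :
  2 <= Rf -> 0 < L -> L <= Rf / 2 -> k <> (0%Z,0%Z) -> IZR (QQ k) <= L -> (e = 1 \/ e = -1)%Z -> NoDup m ->
  (forall x, In x m -> good Rf L k x /\ (0 <= e * ss k x)%Z) ->
  INR (length m) <= (2 * (2 * (L * L) / Rf) + 2) * (2 * (2 * (sqrt L + 1) + 2)).
Proof.
  intros HR HL HLR Hk HQL He Hn Hm.
  assert (HQ := QQ_pos k Hk).
  assert (Hsq := sqrt_pos L).
  apply (split_count_pw m (fun x => (e * ss k x)%Z)); auto.
  - lra.
  - left. apply Rdiv_lt_0_compat; nra.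
  - intros x y Hx Hy. destruct (Hm x Hx) as [Gx Sx]. destruct (Hm y Hy) as [Gy Sy].
    assert (Ix := ts_ident k x). assert (Iy := ts_ident k y).
    assert (Tx := t_bounds _ _ _ _ Gx). assert (Ty := t_bounds _ _ _ _ Gy).
    destruct Gx as [[Gx1 Gx2] _]. destruct Gy as [[Gy1 Gy2] _].
    assert (Ex : IZR (e * ss k x) * IZR (e * ss k x) = IZR (ss k x) ^ 2)
      by (rewrite mult_IZR; destruct He as [-> | ->]; ring).
    assert (Ey : IZR (e * ss k y) * IZR (e * ss k y) = IZR (ss k y) ^ 2)
      by (rewrite mult_IZR; destruct He as [-> | ->]; ring).
    apply IZR_le in Sx. apply IZR_le in Sy.
    set (A := IZR (e * ss k x)) in *. set (B := IZR (e * ss k y)) in *.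
    set (Q := IZR (QQ k)) in *.
    assert (Htx : IZR (tt k x) ^ 2 < L * L) by nra.
    assert (Hty : IZR (tt k y) ^ 2 < L * L) by nra.
    assert (Hnx : 0 <= IZR (nZ x)) by nra.
    assert (HA2 : Rf * Rf / 4 <= A * A) by nra.
    assert (HB2 : Rf * Rf / 4 <= B * B) by nra.
    assert (HA : Rf / 2 <= A) by nra. assert (HB : Rf / 2 <= B) by nra.
    apply abs_diff_bound; try lra.
    apply Rabs_le_intro. split; nra.
  - intros j m' Hn' Hm'.
    rewrite <- (filter_length (fun x => Z.leb 0 (tt k x)) m'). rewrite plus_INR.
    assert (Hs : forall x, In x m' -> ss k x = (e * j)%Z).
    { intros x Hx. destruct (Hm' x Hx) as [_ E]. rewrite <- E. destruct He; subst; lia. }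
    assert (INR (length (filter (fun x => Z.leb 0 (tt k x)) m')) <= 2 * (sqrt L + 1) + 2).
    { apply (c1_class Rf L k (e * j) 1); auto. apply NoDup_filter; auto.
      intros x Hx. apply filter_In in Hx. destruct Hx as [Hx Hl].
      destruct (Hm' x Hx) as [Hx' _]. split; [apply Hm; auto|]. split; [apply Hs; auto|].
      apply Z.leb_le in Hl. apply IZR_le in Hl. lra. }
    assert (INR (length (filter (fun x => negb (Z.leb 0 (tt k x))) m')) <= 2 * (sqrt L + 1) + 2).
    { apply (c1_class Rf L k (e * j) (-1)); auto. apply NoDup_filter; auto.
      intros x Hx. apply filter_In in Hx. destruct Hx as [Hx Hl].
      destruct (Hm' x Hx) as [Hx' _]. split; [apply Hm; auto|]. split; [apply Hs; auto|].
      apply Bool.negb_true_iff, Z.leb_gt in Hl. apply IZR_lt in Hl. lra. }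
    lra.
Qed.

Lemma abs_le_sq z M : 0 <= M -> z * z <= M * M -> Rabs z <= M.
Proof. intros. unfold Rabs; destruct Rcase_abs; nra. Qed.

Lemma abs_div_pos z q : 0 < q -> Rabs (z / q) = Rabs z / q.
Proof. intros. unfold Rdiv. rewrite Rabs_mult, Rabs_inv, (Rabs_pos_eq q) by lra. auto. Qed.

Lemma c2_class (Rf L : R) (k : pt) (e : Z) (i0 : Z) (Wj : R) (m : list pt) :
  k <> (0%Z,0%Z) -> (e = 1 \/ e = -1)%Z -> NoDup m -> 0 <= Wj ->
  (forall x, In x m -> up (2 * IZR (tt k x) / sqrt (IZR (QQ k))) = i0) ->
  (forall x y, In x m -> In y m ->
     Rabs (2 * IZR (e * ss k x) / sqrt (IZR (QQ k)) - 2 * IZR (e * ss k y) / sqrt (IZR (QQ k))) <= Wj) ->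
  INR (length m) <= 2 * (Wj + 1) + 2.
Proof.
  intros Hk He Hn HW Hi Hj.
  assert (HQ := QQ_pos k Hk). set (Q := IZR (QQ k)) in *.
  set (q := sqrt Q) in *. assert (Hq : q * q = Q) by (apply sqrt_sqrt; lra).
  assert (Hq0 : 0 < q) by (apply sqrt_lt_R0; lra).
  apply (count_inj_pw m (fun x => up (2 * IZR (e * ss k x) / q)) (Wj + 1)); auto; try lra.
  - intros x y Hx Hy E. apply up_eq in E.
    assert (E2 : up (2 * IZR (tt k x) / q) = up (2 * IZR (tt k y) / q)) by (rewrite (Hi x Hx), (Hi y Hy); auto).
    apply up_eq in E2.
    replace (2 * IZR (e * ss k x) / q - 2 * IZR (e * ss k y) / q) with (2 * (IZR (e * ss k x) - IZR (e * ss k y)) / q) in E by (field; lra).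
    replace (2 * IZR (tt k x) / q - 2 * IZR (tt k y) / q) with (2 * (IZR (tt k x) - IZR (tt k y)) / q) in E2 by (field; lra).
    rewrite abs_div_pos, Rabs_mult, Rabs_pos_eq in E, E2 by lra.
    assert (E' : 2 * Rabs (IZR (e * ss k x) - IZR (e * ss k y)) < q).
    { apply Rmult_lt_reg_r with (/ q). apply Rinv_0_lt_compat; lra. rewrite Rinv_r by lra. exact E. }
    assert (E2' : 2 * Rabs (IZR (tt k x) - IZR (tt k y)) < q).
    { apply Rmult_lt_reg_r with (/ q). apply Rinv_0_lt_compat; lra. rewrite Rinv_r by lra. exact E2. }
    assert (Es : (IZR (e * ss k x) - IZR (e * ss k y)) ^ 2 = (IZR (ss k x) - IZR (ss k y)) ^ 2)
      by (rewrite !mult_IZR; destruct He as [-> | ->]; ring).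
    apply (inj_ts k); auto. fold Q. rewrite <- Es.
    revert E' E2'. unfold Rabs; destruct Rcase_abs; destruct Rcase_abs; intros; nra.
  - intros x y Hx Hy. eapply Rle_trans; [apply up_diff|]. specialize (Hj x y Hx Hy). lra.
Qed.

Lemma abs2div a b q W : 0 < q -> 2 * Rabs (a - b) <= W * q -> Rabs (2 * a / q - 2 * b / q) <= W.
Proof.
  intros Hq H. replace (2 * a / q - 2 * b / q) with (2 * (a - b) / q) by (field; lra).
  rewrite abs_div_pos, Rabs_mult, (Rabs_pos_eq 2) by lra.
  apply Rmult_le_reg_r with q; auto. unfold Rdiv. rewrite Rmult_assoc, Rinv_l by lra. lra.
Qed.

Lemma c2_half (Rf L : R) (k : pt) (e : Z) (m : list pt) :
  2 <= Rf -> 0 < L -> L <= Rf / 2 -> k <> (0%Z,0%Z) -> L < IZR (QQ k) -> (e = 1 \/ e = -1)%Z -> NoDup m ->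
  (forall x, In x m -> good Rf L k x /\ (0 <= e * ss k x)%Z) ->
  INR (length m) <= 36 * sqrt L + 32.
Proof.
  intros HR HL HLR Hk HQL He Hn Hm.
  assert (HQ := QQ_pos k Hk). set (Q := IZR (QQ k)) in *.
  set (q := sqrt Q). assert (Hq : q * q = Q) by (apply sqrt_sqrt; lra).
  assert (Hq0 : 0 < q) by (apply sqrt_lt_R0; lra).
  set (r := sqrt L). assert (Hr : r * r = L) by (apply sqrt_sqrt; lra).
  assert (Hr0 : 0 < r) by (apply sqrt_lt_R0; lra).
  assert (Hrq : r <= q) by nra.
  assert (F : forall x, In x m ->
    (Q - L) / 2 < IZR (tt k x) < (Q + L) / 2 /\
    0 <= IZR (e * ss k x) /\
    Q * (Rf * Rf) - (Q + L) * (Q + L) / 4 < IZR (e * ss k x) * IZR (e * ss k x) /\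
    IZR (e * ss k x) * IZR (e * ss k x) < Q * (Rf * Rf + L) - (Q - L) * (Q - L) / 4).
  { intros x Hx. destruct (Hm x Hx) as [Gx Sx].
    assert (Ix := ts_ident k x). fold Q in Ix.
    assert (Tx := t_bounds _ _ _ _ Gx). fold Q in Tx.
    destruct Gx as [[Gx1 Gx2] _].
    assert (Ex : IZR (e * ss k x) * IZR (e * ss k x) = IZR (ss k x) ^ 2)
      by (rewrite mult_IZR; destruct He as [-> | ->]; ring).
    apply IZR_le in Sx. rewrite Ex.
    assert (0 < IZR (tt k x)) by lra.
    split; [lra|]. split; [exact Sx|]. split; nra. }
  destruct (Rle_dec Q (Rf * Rf)) as [Ha | Hb].
  -
    assert (Bd : INR (length m) <= (2 * (2 * sqrt L + 1) + 2) * (2 * (2 + 1) + 2)).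
    { apply (split_count_pw m (fun x => up (2 * IZR (tt k x) / q))); auto; try lra.
      - fold r; lra.
      - intros x y Hx Hy. eapply Rle_trans; [apply up_diff|]. apply Rplus_le_compat_r.
        destruct (F x Hx) as [Tx _]. destruct (F y Hy) as [Ty _]. fold r.
        apply abs2div; auto.
        assert (Rabs (IZR (tt k x) - IZR (tt k y)) <= L) by (apply Rabs_le_intro; lra).
        nra.
      - intros j m' Hn' Hm'. apply (c2_class Rf L k e j); auto; try lra.
        + intros x Hx. apply Hm'; auto.
        + intros x y Hx Hy. apply abs2div; auto.
          destruct (Hm' x Hx) as [Hx' _]. destruct (Hm' y Hy) as [Hy' _].
          destruct (F x Hx') as [_ [Sx [Ax1 Ax2]]]. destruct (F y Hy') as [_ [Sy [Ay1 Ay2]]].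
          set (A := IZR (e * ss k x)) in *. set (B := IZR (e * ss k y)) in *.
          assert (HA : q * Rf / 2 <= A) by nra. assert (HB : q * Rf / 2 <= B) by nra.
          assert (HD : Rabs (A - B) <= (2 * Q * L) / (q * Rf)).
          { apply abs_diff_bound; try nra. apply Rabs_le_intro; split; nra. }
          assert ((2 * Q * L) / (q * Rf) = 2 * q * L / Rf) by (rewrite <- Hq; field; lra).
          rewrite H in HD.
          assert (2 * q * L / Rf <= q) by (apply Rmult_le_reg_r with Rf; [lra|]; unfold Rdiv; rewrite Rmult_assoc, Rinv_l by lra; nra).
          change (sqrt (IZR (QQ k))) with q. lra. }
    fold r in Bd. lra.
  -
    assert (HqR : Rf < q) by nra.
    assert (Bd : INR (length m) <= (2 * 2 + 2) * (2 * (3 * sqrt L + 1) + 2)).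
    { apply (split_count_pw m (fun x => up (2 * IZR (tt k x) / q))); auto; try lra.
      - fold r. nra.
      - intros x y Hx Hy. eapply Rle_trans; [apply up_diff|].
        destruct (F x Hx) as [Tx _]. destruct (F y Hy) as [Ty _].
        assert (Rabs (2 * IZR (tt k x) / q - 2 * IZR (tt k y) / q) <= 1); [|lra].
        apply abs2div; auto.
        assert (Rabs (IZR (tt k x) - IZR (tt k y)) <= L) by (apply Rabs_le_intro; lra).
        nra.
      - intros j m' Hn' Hm'. apply (c2_class Rf L k e j); auto; try (fold r; nra).
        + intros x Hx. apply Hm'; auto.
        + intros x y Hx Hy. apply abs2div; auto. change (sqrt (IZR (QQ k))) with q. fold r.
          destruct (Hm' x Hx) as [Hx' _]. destruct (Hm' y Hy) as [Hy' _].
          destruct (F x Hx') as [_ [Sx [Ax1 Ax2]]]. destruct (F y Hy') as [_ [Sy [Ay1 Ay2]]].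
          set (A := IZR (e * ss k x)) in *. set (B := IZR (e * ss k y)) in *.
          assert (HD := sq_diff_le A B Sx Sy).
          assert (Rabs (A * A - B * B) <= 2 * Q * L) by (apply Rabs_le_intro; split; nra).
          assert (HAB : Rabs (2 * (A - B)) <= 3 * r * q).
          { apply abs_le_sq; [nra|]. rewrite <- Hq, <- Hr in H.
            assert ((A - B) * (A - B) <= 2 * (q * q) * (r * r)) by lra. nra. }
          rewrite Rabs_mult, (Rabs_pos_eq 2) in HAB by lra. lra. }
    fold r in Bd |- *. lra.
Qed.

Lemma main_bound (Rf D : R) (k : pt) (l : list pt) :
  2 <= Rf -> 0 < D <= 1/8 -> k <> (0%Z,0%Z) -> NoDup l ->
  (forall p, In p l -> in_AAk Rf D k p) ->
  INR (length l) <= 128 * ((2 * Rf * D + D * D) * (2 * Rf * D + D * D) * sqrt (2 * Rf * D + D * D) / Rf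
                          + sqrt (2 * Rf * D + D * D) + 1).
Proof.
  intros HR HD Hk Hn Hl.
  set (L := 2 * Rf * D + D * D).
  assert (HL : 0 < L) by (unfold L; nra).
  assert (HLR : L <= Rf / 2) by (unfold L; nra).
  assert (G : forall p, In p l -> good Rf L k p) by (intros p Hp; apply aak_good; auto; lra).
  set (r := sqrt L). assert (Hr : r * r = L) by (apply sqrt_sqrt; lra).
  assert (Hr0 : 0 < r) by (apply sqrt_lt_R0; lra).
  assert (HX : 0 <= L * L * r / Rf) by (apply Rmult_le_pos; [nra | left; apply Rinv_0_lt_compat; lra]).
  rewrite <- (filter_length (fun x => Z.leb 0 (ss k x)) l). rewrite plus_INR.
  set (l1 := filter (fun x => Z.leb 0 (ss k x)) l).
  set (l2 := filter (fun x => negb (Z.leb 0 (ss k x))) l).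
  assert (N1 : NoDup l1) by (apply NoDup_filter; auto).
  assert (N2 : NoDup l2) by (apply NoDup_filter; auto).
  assert (M1 : forall x, In x l1 -> good Rf L k x /\ (0 <= 1 * ss k x)%Z).
  { intros x Hx. apply filter_In in Hx. destruct Hx as [Hx E]. apply Z.leb_le in E. split; auto. lia. }
  assert (M2 : forall x, In x l2 -> good Rf L k x /\ (0 <= -1 * ss k x)%Z).
  { intros x Hx. apply filter_In in Hx. destruct Hx as [Hx E].
    apply Bool.negb_true_iff, Z.leb_gt in E. split; auto. lia. }
  destruct (Rle_dec (IZR (QQ k)) L) as [H1 | H2].
  - assert (B1 := c1_half Rf L k 1 l1 HR HL HLR Hk H1 (or_introl eq_refl) N1 M1).
    assert (B2 := c1_half Rf L k (-1) l2 HR HL HLR Hk H1 (or_intror eq_refl) N2 M2).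
    fold r in B1, B2.
    assert (Hq : L * L / Rf <= L * L * r / Rf + 1).
    { apply Rmult_le_reg_r with Rf; [lra|]. unfold Rdiv. rewrite !Rmult_plus_distr_r, !Rmult_assoc, Rinv_l by lra.
      destruct (Rle_dec 1 L); nra. }
    assert (E : (2 * (2 * (L * L) / Rf) + 2) * (2 * (2 * (r + 1) + 2)) =
                16 * (L * L * r / Rf) + 32 * (L * L / Rf) + 8 * r + 16) by (field; lra).
    rewrite E in B1, B2. lra.
  - assert (H2' : L < IZR (QQ k)) by lra.
    assert (B1 := c2_half Rf L k 1 l1 HR HL HLR Hk H2' (or_introl eq_refl) N1 M1).
    assert (B2 := c2_half Rf L k (-1) l2 HR HL HLR Hk H2' (or_intror eq_refl) N2 M2).
    fold r in B1, B2. lra.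
Qed.

Lemma box_bound (B : R) (l : list pt) : 0 <= B -> NoDup l ->
  (forall p, In p l -> Rabs (IZR (fst p)) <= B /\ Rabs (IZR (snd p)) <= B) ->
  INR (length l) <= (4 * B + 2) * (4 * B + 2).
Proof.
  intros HB Hn Hl.
  replace (4 * B + 2) with (2 * (2 * B) + 2) by ring.
  apply (split_count_pw l (fun p => fst p) (2 * B)); auto; try lra.
  - intros x y Hx Hy. destruct (Hl x Hx) as [A _]. destruct (Hl y Hy) as [C _].
    apply Rabs_le_inv in A. apply Rabs_le_inv in C. apply Rabs_le_intro. lra.
  - intros j m Hm Hmm. apply (count_inj_pw m (fun p => snd p) (2 * B)); auto; try lra.
    + intros x y Hx Hy E. destruct (Hmm x Hx) as [_ E1]. destruct (Hmm y Hy) as [_ E2].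
      destruct x, y; simpl in *; subst; auto.
    + intros x y Hx Hy. destruct (Hmm x Hx) as [Hx' _]. destruct (Hmm y Hy) as [Hy' _].
      destruct (Hl x Hx') as [_ A]. destruct (Hl y Hy') as [_ C].
      apply Rabs_le_inv in A. apply Rabs_le_inv in C. apply Rabs_le_intro. lra.
Qed.

Lemma annulus_box R D k p : 0 < R -> 0 < D -> in_AAk R D k p ->
  Rabs (IZR (fst p)) <= R + D /\ Rabs (IZR (snd p)) <= R + D.
Proof.
  intros HR HD [[H1 H2] _]. unfold pnorm in *.
  assert (Hn : 0 <= norm2 p) by (unfold norm2; nra).
  assert (E := sqrt_sqrt _ Hn). assert (0 <= sqrt (norm2 p)) by apply sqrt_pos.
  unfold norm2 in *. split; apply Rabs_le_intro; split; nra.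
Qed.

Lemma NoDup_prod {A B} (la : list A) (lb : list B) : NoDup la -> NoDup lb -> NoDup (list_prod la lb).
Proof.
  induction 1 as [|a la Ha Hla IH]; intros Hb; simpl; [constructor|].
  apply NoDup_app; auto.
  - apply NoDup_map_NoDup_ForallPairs; auto. intros x y _ _ E. inversion E; auto.
  - intros [x y] H1 H2. apply in_map_iff in H1. destruct H1 as [z [E _]]. inversion E; subst.
    apply in_prod_iff in H2. tauto.
Qed.

Lemma card_lower (R : R) (N : nat) : 0 < R -> card_BF R N -> R * R < 4 * INR N /\ 1 <= INR N.
Proof.
  intros HR [lB [Hn [Hi Hlen]]].
  destruct (archimed (R / 2)) as [a1 a2].
  assert (Hu0 : 0 < IZR (up (R / 2))) by lra. apply lt_IZR in Hu0.
  set (M := Z.to_nat (up (R / 2) - 1)).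
  set (sl := map Z.of_nat (seq 0 (S M))).
  assert (Hsl : forall z, In z sl -> (0 <= z)%Z /\ IZR z <= R / 2).
  { intros z Hz. unfold sl in Hz. apply in_map_iff in Hz. destruct Hz as [i [<- Hi']].
    apply in_seq in Hi'. split; [lia|]. 
    assert (Z.of_nat i <= up (R / 2) - 1)%Z by (unfold M in Hi'; lia).
    apply IZR_le in H. rewrite minus_IZR in H. lra. }
  assert (Hinc : incl (list_prod sl sl) lB).
  { intros [a b] Hab. apply in_prod_iff in Hab. destruct Hab as [Ha Hb].
    apply Hi. destruct (Hsl a Ha) as [a0 a3]. destruct (Hsl b Hb) as [b0 b3].
    apply IZR_le in a0. apply IZR_le in b0.
    unfold in_BF, pnorm, norm2; simpl.
    rewrite <- (sqrt_Rsqr R) by lra. apply sqrt_lt_1_alt. unfold Rsqr. split; nra. }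
  assert (Nsl : NoDup sl).
  { unfold sl. apply NoDup_map_NoDup_ForallPairs; [|apply seq_NoDup]. intros x y _ _ E; lia. }
  assert (Hle := NoDup_incl_length (NoDup_prod sl sl Nsl Nsl) Hinc).
  rewrite length_prod in Hle. unfold sl in Hle. rewrite length_map, length_seq in Hle.
  rewrite ?Hlen in Hle. apply le_INR in Hle. rewrite mult_INR in Hle.
  assert (ES : INR (S M) = IZR (up (R / 2))).
  { rewrite INR_IZR_INZ. f_equal. unfold M. lia. }
  rewrite ES in Hle. subst N. assert (Hu1 : (1 <= up (R / 2))%Z) by lia. apply IZR_le in Hu1. change (@length (prod Z Z) lB) with (@length pt lB) in Hle. split; nra.
Qed.

Lemma Rpower_pos x y : 0 < Rpower x y.
Proof. unfold Rpower. apply exp_pos. Qed.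

Lemma exists_j (a : R) : 0 < a -> exists j : nat, (0 < j)%nat /\ 1 <= INR j * a.
Proof.
  intros Ha. destruct (archimed (/ a)) as [h1 h2].
  assert (0 < / a) by (apply Rinv_0_lt_compat; auto).
  assert (Hp : (0 < up (/ a))%Z) by (apply lt_IZR; lra).
  exists (Z.to_nat (up (/ a))). split; [lia|].
  rewrite INR_IZR_INZ, Z2Nat.id by lia.
  apply Rmult_le_reg_r with (/ a); auto. rewrite Rmult_assoc, Rinv_r by lra. lra.
Qed.

Theorem lemmaA4 (alpha c C' : R) :
  0 < alpha < 1 / 2 -> 0 < c -> c < C' ->
  exists C : R, 0 < C /\
    forall (kF : R) (N : nat) (Delta : R) (k : pt),
      fermi_convention kF ->
      card_BF kF N ->
      c * Rpower (INR N) (- alpha) < Delta < C' * Rpower (INR N) (- alpha) ->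
      k <> (0%Z, 0%Z) ->
      forall l : list pt, NoDup l -> (forall p, In p l -> in_AAk kF Delta k p) ->
        INR (length l) <=
          C * (Rpower (INR N) (3 / 4 - 5 / 2 * alpha)
               + Rpower (INR N) (1 / 4 - 1 / 2 * alpha)).
Proof.
  intros Ha Hc HcC.
  destruct (exists_j alpha) as [j [Hj0 Hj]]; [lra|].
  assert (HC' : 0 < C') by lra.
  set (s6 := sqrt (6 * C')).
  assert (Hs6 : s6 * s6 = 6 * C') by (apply sqrt_sqrt; lra).
  assert (Hs60 : 0 < s6) by (apply sqrt_lt_R0; lra).
  set (Ka := (4 * (2 + C') + 2) * (4 * (2 + C') + 2)).
  set (W := sqrt ((8 * C') ^ j)).
  assert (HW0 : 0 <= W) by apply sqrt_pos.
  set (Kb := (4 * (2 * W + C') + 2) * (4 * (2 * W + C') + 2)).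
  set (Km := 128 * (18 * C' * C' * s6 + s6 + 1)).
  assert (HKa : 0 < Ka) by (unfold Ka; nra).
  assert (HKb : 0 < Kb) by (unfold Kb; nra).
  assert (HKm : 0 < Km) by (unfold Km; nra).
  exists (Km + Ka + Kb). split; [lra|].
  intros R N D k [HR _] HN HD Hk l Hn Hl.
  destruct (card_lower R N HR HN) as [HRN HN1].
  set (Nr := INR N) in *.
  set (E := Rpower Nr (- alpha)) in *.
  set (X := Rpower Nr (1 / 4 - 1 / 2 * alpha)).
  set (Y := Rpower Nr (3 / 4 - 5 / 2 * alpha)).
  assert (HE0 : 0 < E) by apply Rpower_pos.
  assert (HE1 : E <= 1).
  { unfold E. apply Rle_trans with (Rpower Nr 0); [apply Rle_Rpower; lra|rewrite Rpower_O by lra; lra]. }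
  assert (HX1 : 1 <= X).
  { unfold X. apply Rle_trans with (Rpower Nr 0); [rewrite Rpower_O by lra; lra|]. apply Rle_Rpower; lra. }
  assert (HY0 : 0 < Y) by apply Rpower_pos.
  assert (HXX : X * X = sqrt Nr * E).
  { unfold X, E. rewrite <- Rpower_plus, <- Rpower_sqrt by lra. rewrite <- Rpower_plus. f_equal. field. }
  assert (HY : Y = X * X * X * E).
  { unfold Y, X, E. rewrite <- !Rpower_plus. f_equal. field. }
  assert (HsN : sqrt Nr * sqrt Nr = Nr) by (apply sqrt_sqrt; lra).
  assert (HsN0 : 0 < sqrt Nr) by (apply sqrt_lt_R0; lra).
  assert (HR2 : R < 2 * sqrt Nr) by nra.
  assert (HD0 : 0 < D) by nra.
  assert (HDC : D < C' * E) by lra.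
  assert (HDC' : D < C') by nra.
  destruct (Rlt_dec R 2) as [Rsmall | Rbig].
  -
    assert (Hb := box_bound (R + D) l ltac:(lra) Hn (fun p Hp => annulus_box R D k p HR HD0 (Hl p Hp))).
    assert (INR (length l) <= Ka) by (unfold Ka; nra).
    nra.
  - destruct (Rle_dec D (1/8)) as [Dsmall | Dbig].
    +
      assert (Hm := main_bound R D k l ltac:(lra) ltac:(lra) Hk Hn Hl).
      set (L := 2 * R * D + D * D) in *.
      set (r := sqrt L) in *.
      assert (HL0 : 0 < L) by (unfold L; nra).
      assert (Hr : r * r = L) by (apply sqrt_sqrt; lra).
      assert (Hr0 : 0 < r) by (apply sqrt_lt_R0; lra).
      assert (HL3 : L <= 3 * (R * D)) by (unfold L; nra).
      assert (HP : R * D <= 2 * C' * (X * X)).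
      { rewrite HXX. assert (R * D <= 2 * sqrt Nr * (C' * E)) by (apply Rmult_le_compat; lra). lra. }
      assert (Hrx : r <= s6 * X).
      { apply Rabs_le_inv. rewrite <- (Rabs_pos_eq r) by lra. apply abs_le_sq; [nra|].
        replace (s6 * X * (s6 * X)) with ((s6 * s6) * (X * X)) by ring. rewrite Hs6, (Rabs_pos_eq r), Hr by lra.
        assert (3 * (R * D) <= 3 * (2 * C' * (X * X))) by lra. lra. }
      assert (Hq : L * L * r / R <= 18 * C' * C' * s6 * Y).
      { apply Rmult_le_reg_r with R; [lra|]. unfold Rdiv. rewrite Rmult_assoc, Rinv_l, Rmult_1_r by lra.
        rewrite HY.
        assert (L * L <= 9 * (R * D) * (R * D)) by nra.
        assert (H2 : R * D * D <= 2 * C' * (X * X) * (C' * E)) by (apply Rmult_le_compat; nra).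
        assert (L * L * r <= 9 * (R * D) * (R * D) * (s6 * X)) by (apply Rmult_le_compat; nra).
        assert (9 * (R * D) * (R * D) * (s6 * X) = 9 * R * (R * D * D) * (s6 * X)) by ring.
        assert (H3 : 9 * R * (R*D*D) * (s6*X) <= 9 * R * (2*C'*(X*X)*(C'*E)) * (s6*X))
          by (apply Rmult_le_compat_r; [nra|]; apply Rmult_le_compat_l; nra).
        replace (18 * C' * C' * s6 * (X * X * X * E) * R) with (9 * R * (2*C'*(X*X)*(C'*E)) * (s6*X)) by ring.
        lra. }
      assert (Hm' : INR (length l) <= Km * (Y + X)).
      { unfold Km. eapply Rle_trans; [exact Hm|]. nra. }
      nra.
    +
      assert (H8 : 1 < 8 * C' * E) by lra.
      assert (Hp := Rlt_pow_R1 _ j H8 Hj0).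
      assert (HEj : E ^ j <= / Nr).
      { unfold E. rewrite <- Rpower_pow by apply Rpower_pos. rewrite Rpower_mult.
        rewrite <- (Rpower_1 Nr) by lra. rewrite <- Rpower_Ropp. rewrite (Rpower_1 Nr) by lra.
        apply Rle_Rpower; lra. }
      rewrite Rpow_mult_distr in Hp.
      assert (HNb : Nr < (8 * C') ^ j).
      { assert (0 < (8 * C') ^ j) by (apply pow_lt; lra).
        assert (1 < (8 * C') ^ j * / Nr) by nra.
        apply Rmult_lt_reg_r with (/ Nr). apply Rinv_0_lt_compat; lra. rewrite Rinv_r by lra. lra. }
      assert (HsW : sqrt Nr <= W) by (apply sqrt_le_1_alt; lra).
      assert (Hb := box_bound (R + D) l ltac:(lra) Hn (fun p Hp => annulus_box R D k p HR HD0 (Hl p Hp))).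
      assert (R + D <= 2 * W + C') by lra.
      assert (INR (length l) <= Kb) by (unfold Kb; nra).
      nra.
Qed.
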